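(* For every integer $n\ge 1$, every independence root $z$ of every finite simple graph on $n$ vertices satisfies $|z|\le 3^{\frac{n}{3}}+n-1$. That is, $M(n)\le 3^{\frac{n}{3}}+n-1$, where $M(n)$ is the maximum modulus of an independence root over all graphs on $n$ vertices.
   Context: For a finite simple graph $G$, the independence polynomial is $i(G,x)=\sum_{k=0}^{\alpha(G)} i_k x^k$, where $i_k$ is the number of independent sets of size $k$ in $G$ (with $i_0=1$) and $\alpha(G)$ is the independence number. Its complex roots are the independence roots of $G$. *)

(* Defs.v *)
From HB Require Import structures.
From mathcomp Require Import all_boot all_order all_algebra.
From mathcomp Require Import complex.
From mathcomp Require Import all_classical all_reals all_analysis.
Set Implicit Arguments. Unset Strict Implicit. Unset Printing Implicit Defensive.
Import Order.TTheory GRing.Theory Num.Theory.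
Local Open Scope ring_scope.

Definition simple_graph (T : finType) (e : rel T) : Prop :=
  symmetric e /\ irreflexive e.

Definition independent (T : finType) (e : rel T) (S : {set T}) : bool :=
  [forall x in S, forall y in S, ~~ e x y].

Definition indep_count (T : finType) (e : rel T) (k : nat) : nat :=
  #|[set S : {set T} | independent e S & #|S| == k]|.

Definition indep_poly (R : nzRingType) (T : finType) (e : rel T) : {poly R} :=
  \poly_(k < #|T|.+1) (indep_count e k)%:R.

(* Main.v *)
Require Import Defs.
From HB Require Import structures.
From mathcomp Require Import all_boot all_order all_algebra.
From mathcomp Require Import complex.
From mathcomp Require Import all_classical all_reals all_analysis.
From mathcomp Require Import ring lra zify.
From mathcomp Require Import fintype finset bigop.
Import Order.TTheory GRing.Theory Num.Theory ComplexField.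
Local Open Scope ring_scope.


Lemma ek_id (F : comNzRingType) (a : nat -> F) (c x : F) (d : nat) :
  (c - x) * \sum_(k < d.+1) a k * x ^+ k =
  c * a 0%N + \sum_(k < d) (c * a k.+1 - a k) * x ^+ k.+1 - a d * x ^+ d.+1.
Proof.
elim: d => [|d IH]; first by rewrite big_ord1 big_ord0 addr0 expr0 expr1 mulr1; ring.
rewrite big_ord_recr /= mulrDr IH big_ord_recr /= !exprS; ring.
Qed.

Lemma EK (F : numDomainType) (a : nat -> F) (d : nat) (c z : F) :
  0 <= c -> (forall k, (k <= d)%N -> 0 < a k) ->
  (forall k, (k < d)%N -> a k <= c * a k.+1) ->
  \sum_(k < d.+1) a k * z ^+ k = 0 -> `|z| <= c.
Proof.
move=> c0 apos amono H.
have := ek_id _ a c z d; rewrite H mulr0 => /eqP; rewrite eq_sym subr_eq add0r => /eqP E.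
have bnn : forall k : 'I_d, 0 <= c * a k.+1 - a k.
  by move=> k; rewrite subr_ge0 amono.
have le1 : a d * `|z| ^+ d.+1 <= c * a 0%N + \sum_(k < d) (c * a k.+1 - a k) * `|z| ^+ k.+1.
  have -> : a d * `|z| ^+ d.+1 = `|a d * z ^+ d.+1|.
    by rewrite normrM normrX (ger0_norm (ltW (apos _ _))).

  rewrite -E; apply: le_trans (ler_normD _ _) _.
  rewrite normrM (ger0_norm c0) (ger0_norm (ltW (apos _ _))) // lerD2l.
  idtac.
  apply: le_trans (ler_norm_sum _ _ _) _; apply: ler_sum => k _.
  by rewrite normrM normrX ger0_norm.
have := ek_id _ a c `|z| d.
have Spos : 0 < \sum_(k < d.+1) a k * `|z| ^+ k.
  rewrite big_ord_recl /= expr0 mulr1; apply: ltr_wpDr; last exact: apos.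
  by apply: sumr_ge0 => k _; rewrite mulr_ge0 ?exprn_ge0 // ltW // apos.
move=> E2; rewrite -subr_ge0 -(pmulr_lge0 _ Spos) E2 subr_ge0 //.
Qed.

Lemma card_bigcup_le (T I : finType) (P : {set I}) (F : I -> {set T}) :
  (#|\bigcup_(i in P) F i| <= \sum_(i in P) #|F i|)%N.
Proof.
apply: (big_ind2 (fun (X : {set T}) (n : nat) => #|X| <= n)%N) => //.
  by rewrite cards0.
move=> X1 n1 X2 n2 h1 h2; apply: leq_trans (leq_card_setU _ _) _; exact: leq_add.
Qed.

Lemma cube_le k : (k ^ 3 <= 3 ^ k)%N.
Proof.
elim: k => // k IH.
case: (ltnP k 3) => hk.
  by case: k hk IH => [|[|[|]]].
rewrite (expnS 3); apply: leq_trans (leq_mul (leqnn 3) IH).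
have : (k.+1 ^ 3 <= 3 * k ^ 3)%N by rewrite !expnS expn0; nia.
by [].
Qed.

Section MM.
Variables (T : finType) (e : rel T).
Hypothesis (esym : symmetric e) (eirr : irreflexive e).

Definition maxind (U S : {set T}) : bool :=
  [&& S \subset U, independent e S & [forall w in U :\: S, [exists s in S, e w s]]].
Definition mis (U : {set T}) : nat := #|[set S | maxind U S]|.
Definition nb (U : {set T}) (v : T) : {set T} := [set u in U | e v u].

Lemma indepP (S : {set T}) : reflect (forall x y, x \in S -> y \in S -> ~~ e x y) (independent e S).
Proof.
apply: (iffP forall_inP) => [H x y xS yS | H x xS].
  by move: (H x xS) => /forall_inP; apply.
by apply/forall_inP => y yS; apply: H.
Qed.

Lemma MM U : (mis U ^ 3 <= 3 ^ #|U|)%N.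
Proof.
have [m] := ubnP #|U|; elim: m U => // m IH U ltU.
case: (set_0Vmem U) => [->|[v0 v0U]].
  rewrite cards0 expn0; suff : (mis set0 <= 1)%N by case: (mis set0) => [|[]].
  rewrite /mis -(cards1 (@set0 T)); apply: subset_leq_card; apply/subsetP => S.
  by rewrite !inE => /and3P[]; rewrite subset0.
pose v := [arg min_(v < v0 in U) #|nb U v|].
have [vU vmin] : v \in U /\ forall u, u \in U -> (#|nb U v| <= #|nb U u|)%N.
  by rewrite /v; case: arg_minnP.
pose d := #|nb U v|.
pose Nv := v |: nb U v.
pose Uu u := U :\: (u |: nb U u).
have nbNin u : u \notin nb U u by rewrite inE eirr andbF.
have NvU : Nv \subset U.
  by apply/subsetP => x; rewrite !inE => /orP[/eqP->|/andP[]].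
have cardNv : #|Nv| = d.+1 by rewrite cardsU1 nbNin.
have cardUu u : u \in U -> (#|Uu u| + #|nb U u|.+1)%N = #|U|.
  move=> uU; rewrite cardsD.
  have -> : U :&: (u |: nb U u) = u |: nb U u.
    apply/setIidPr/subsetP => x; rewrite !inE => /orP[/eqP->|/andP[]] //.
  rewrite cardsU1 nbNin add1n subnK //.
  have := cardsU1 u (nb U u); rewrite nbNin add1n => <-; apply: subset_leq_card.
  by apply/subsetP => x; rewrite !inE => /orP[/eqP->|/andP[]].
have cover : [set S | maxind U S] \subset
   \bigcup_(u in Nv) [set u |: S' | S' in [set S' | maxind (Uu u) S']].
  apply/subsetP => S; rewrite inE => /and3P[SU /indepP Sind /forall_inP Smax].
  have [u uNv uS] : exists2 u, u \in Nv & u \in S.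
    case vS: (v \in S); first by exists v; rewrite ?setU11.
    have : v \in U :\: S by rewrite inE vS vU.
    move/Smax => /exists_inP[s sS evs]; exists s => //.
    by rewrite !inE evs (subsetP SU) ?orbT.
  apply/bigcupP; exists u => //; apply/imsetP; exists (S :\ u); last first.
    by rewrite setD1K.
  rewrite inE; apply/and3P; split.
  - apply/subsetP => x; rewrite !inE => /andP[xu xS].
    by rewrite (negbTE xu) (negbTE (Sind _ _ uS xS)) (subsetP SU _ xS) andbF.
  - by apply/indepP => x y; rewrite !inE => /andP[_ xS] /andP[_ yS]; apply: Sind.
  - apply/forall_inP => w; rewrite !inE negb_or negb_and => /andP[/orP wS] /andP[/andP[wu nuw] wU].
    have wS' : w \notin S by case: wS => [/negPn/eqP wuE|//]; rewrite wuE eqxx in wu.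
    have : w \in U :\: S by rewrite inE wS' wU.
    move/Smax => /exists_inP[s sS ews]; apply/exists_inP; exists s => //.
    rewrite !inE sS andbT; apply: contraNneq nuw => esu.
    by rewrite wU /= esym -esu ews.
have le1 : (mis U <= \sum_(u in Nv) mis (Uu u))%N.
  rewrite {1}/mis; apply: leq_trans (subset_leq_card cover) _.
  apply: leq_trans (card_bigcup_le _ _ _ _) _.
  by apply: leq_sum => u _; apply: leq_imset_card.
pose M := \max_(u in Nv) mis (Uu u).
have le2 : (mis U <= #|Nv| * M)%N.
  apply: leq_trans le1 _; rewrite -sum_nat_const; apply: leq_sum => u uNv.
  exact: (leq_bigmax_cond (F := fun u => mis (Uu u))).
have MM3 : (M ^ 3 <= 3 ^ (#|U| - d.+1))%N.
  rewrite /M; apply: (big_ind (fun x => x ^ 3 <= 3 ^ (#|U| - d.+1))%N).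
  - by rewrite exp0n.
  - by move=> x y hx hy; case: (leqP x y) => h; rewrite ?(maxn_idPr h) ?(maxn_idPl (ltnW h)).
  move=> u uNv; have uU := subsetP NvU u uNv.
  have hc := cardUu u uU; have hd := vmin u uU.
  apply: leq_trans (IH (Uu u) _) _.
    rewrite -ltnS; apply: leq_trans ltU; rewrite -hc ltnS; lia.
  rewrite leq_pexp2l //; rewrite -/d in hd; lia.
have dU : (d.+1 <= #|U|)%N by rewrite -cardNv subset_leq_card.
apply: leq_trans (_ : _ <= (#|Nv| * M) ^ 3)%N _; first by rewrite leq_exp2r.
rewrite expnMn cardNv.
apply: leq_trans (leq_mul (cube_le _) MM3) _.
by rewrite -expnD subnKC.
Qed.


Definition mk (k : nat) : nat :=
  #|[set S | [&& independent e S, #|S| == k & maxind setT S]]|.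

Lemma count_step k : (indep_count e k <= mk k + k.+1 * indep_count e k.+1)%N.
Proof.
rewrite /indep_count.
set A := [set S | independent e S & #|S| == k].
set B := [set S | independent e S & #|S| == k.+1].
rewrite -(cardsID [set S | maxind setT S] A); apply: leq_add.
  apply: subset_leq_card; apply/subsetP => S; rewrite !inE => /andP[/andP[-> ->] ->] //.
have sub : A :\: [set S | maxind setT S] \subset
   \bigcup_(T' in B) [set S : {set T} | S \subset T' & #|S| == k].
  apply/subsetP => S; rewrite !inE => /andP[nmax /andP[Sind /eqP Sk]].
  move: nmax; rewrite /maxind subsetT Sind /= => /forall_inPn[w].
  rewrite !inE andbT => wS /exists_inPn wnb.
  apply/bigcupP; exists (w |: S); last by rewrite inE subsetUr Sk eqxx.
  rewrite inE cardsU1 wS Sk eqxx andbT.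
  move/indepP: Sind => Sind; apply/indepP => x y.
  rewrite !inE => /orP[/eqP->|xS] /orP[/eqP->|yS].
  - by rewrite eirr.
  - by apply: wnb.
  - by rewrite esym; apply: wnb.
  - by apply: Sind.
apply: leq_trans (subset_leq_card sub) _.
apply: leq_trans (card_bigcup_le _ _ _ _) _.
rewrite mulnC -sum_nat_const; apply: leq_sum => T'.
by rewrite inE => /andP[_ /eqP hc]; rewrite cards_draws hc binSn.
Qed.

Lemma indep_sub (A S : {set T}) : A \subset S -> independent e S -> independent e A.
Proof.
move=> AS /indepP Si; apply/indepP => x y xA yA.
by apply: Si; apply: (subsetP AS).
Qed.

End MM.

Local Open Scope complex_scope.

Lemma cube_root_bound (R : realType) (n m : nat) :
  (m ^ 3 <= 3 ^ n)%N -> (m%:R : R) <= 3%:R `^ (n%:R / 3%:R).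
Proof.
move=> h.
have t3 : (3%:R `^ (n%:R / 3%:R) : R) ^+ 3 = 3%:R ^+ n.
  rewrite -powR_mulrn ?powR_ge0 // -powRrM mulfVK ?powR_mulrn //.
rewrite -(ler_pXn2r (n:=3)) // ?inE ?powR_ge0 //.
- apply: le_trans (_ : _ <= 3%:R ^+ n) _; last by rewrite t3.
  by rewrite -natrX -natrX ler_nat.
- by rewrite nnegrE ler0n.
- by rewrite nnegrE powR_ge0.
Qed.

Theorem theorem3 (R : realType) (n : nat) (e : rel 'I_n) (z : R[i]) :
  (1 <= n)%N -> simple_graph e ->
  root (indep_poly R[i] e) z ->
  `|z| <= ((3%:R `^ (n%:R / 3%:R) + n%:R - 1 : R)%:C).
Proof.
move=> n1 [esym eirr] hroot.
pose ic := indep_count e.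
pose t : R := 3%:R `^ (n%:R / 3%:R).
have hmis : ((mis _ e setT)%:R : R) <= t.
  by apply: cube_root_bound; have := MM _ _ esym eirr setT; rewrite cardsT card_ord.
have one_le : (1 : R) <= t.
  by have := @cube_root_bound R n 1%N; rewrite exp1n expn_gt0 => /(_ isT).
have i0 : independent e set0 by apply/forall_inP => x; rewrite inE.
pose S0 := [arg max_(S > set0 | independent e S) #|S|].
have [S0ind S0max] : independent e S0 /\ forall S, independent e S -> (#|S| <= #|S0|)%N.
  by rewrite /S0; case: arg_maxnP => // S Si Smax; split.
pose al := #|S0|.
have icpos k : (k <= al)%N -> (0 < ic k)%N.
  move=> kal; have : (0 < #|[set A : {set 'I_n} | A \subset S0 & #|A| == k]|)%N by rewrite cards_draws bin_gt0.
  rewrite card_gt0 => /set0Pn[A]; rewrite inE => /andP[AS Ak].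
  rewrite /ic /indep_count card_gt0; apply/set0Pn; exists A.
  by rewrite inE Ak andbT (indep_sub _ _ _ _ AS S0ind).
have icz k : (al < k)%N -> ic k = 0%N.
  move=> hk; apply/eqP; rewrite cards_eq0; apply/eqP/setP => S; rewrite !inE.
  apply/negbTE/negP => /andP[Si /eqP Sk]; have := S0max S Si; rewrite /al; lia.
have aln : (al <= n)%N by have := max_card S0; rewrite card_ord.
pose cR : R := t + n%:R - 1.
have step k : (k < al)%N -> (ic k)%:R <= cR * (ic k.+1)%:R.
  move=> kal; have h := count_step _ _ esym eirr k.
  have p1 := icpos k.+1 kal.
  have p1R : (1 : R) <= (ic k.+1)%:R by rewrite ler1n.
  case: (posnP (mk _ e k)) => [m0|mpos].
    rewrite m0 add0n in h.
    have h' : ((ic k)%:R : R) <= k.+1%:R * (ic k.+1)%:R by rewrite -natrM ler_nat.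
    have kn : (k.+1%:R : R) <= n%:R by rewrite ler_nat; lia.
    rewrite /cR; nra.
  have aln1 : (al < n)%N.
    rewrite ltn_neqAle aln andbT; apply/negP => /eqP aln'.
    have S0T : S0 = setT.
      by apply/eqP; rewrite eqEcard subsetT /= cardsT card_ord; move: aln'; rewrite /al => ->.
    move: mpos; rewrite /mk card_gt0 => /set0Pn[S]; rewrite inE => /and3P[Si /eqP Sk /and3P[_ _ /forall_inP Smax]].
    have : ~~ (setT \subset S).
      apply/negP => /subset_leq_card; rewrite cardsT card_ord Sk; lia.
    case/subsetPn => w _ wS.
    have := Smax w; rewrite !inE wS => /(_ isT) /exists_inP[s sS ews].
    move/indepP: S0ind => /(_ w s); rewrite S0T !inE => /(_ isT isT).
    by rewrite ews.
  have mkm : (mk _ e k <= mis _ e setT)%N.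
    by apply: subset_leq_card; apply/subsetP => S; rewrite !inE => /and3P[].
  have mkR : ((mk _ e k)%:R : R) <= t by apply: le_trans hmis; rewrite ler_nat.
  have h' : ((ic k)%:R : R) <= (mk _ e k)%:R + k.+1%:R * (ic k.+1)%:R.
    by rewrite -natrM -natrD ler_nat.
  have kn : (k.+1%:R : R) <= n%:R - 1.
    rewrite lerBrDr natr1 ler_nat; lia.
  rewrite /cR; nra.
move: hroot; rewrite /root /indep_poly horner_poly => /eqP H.
have H2 : \sum_(k < al.+1) ((ic k)%:R : R[i]) * z ^+ k = 0.
  rewrite card_ord in H; rewrite -[RHS]H (big_ord_widen n.+1 (fun k => ((ic k)%:R : R[i]) * z ^+ k)) ?ltnS //.
  rewrite big_mkcond /=; apply: eq_bigr => k _.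
  case: ifP => // hk; rewrite (_ : indep_count e k = 0%N) ?mul0r //; apply: icz; rewrite ltnNge; exact: negbT.
have cpos : (0 : R) <= cR.
  have : (1 : R) <= n%:R by rewrite ler1n.
  rewrite /cR; lra.
apply: (EK _ (fun k => ((ic k)%:R : R[i])) al) H2.
- by rewrite ler0c.
- by move=> k hk; rewrite ltr0n icpos.
- move=> k hk; rewrite -!(rmorph_nat (real_complex R)) -rmorphM lecR.
  exact: step.
Qed.
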